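(* Assume $G$ is an algebraic torus. Let $(\delta,\delta')$ be an adjacent pair in $\mathsf M_{\mathbb R}\setminus\mathcal H$ separated by $H\in\mathcal H$, $\delta_0$ the point where $[\delta,\delta']$ meets $H$, and $F$ the unique facet of $\delta_0+\boldsymbol\nabla$ parallel to $H$ with $F\cap(\delta+\boldsymbol\nabla)\ne\emptyset$. Then $\mathcal C^F_\delta=\mathcal C_\delta\setminus\mathcal C_{\delta'}$, and hence $\mathcal C_\delta\setminus\mathcal C^F_\delta=\mathcal C_\delta\cap\mathcal C_{\delta'}$.
   Context: $G$ is an algebraic torus over an algebraically closed field of characteristic $0$ with character lattice $\mathsf M$, cocharacter lattice $\mathsf N$. $X$ is a quasi-symmetric representation with weights $\beta_1,\dots,\beta_d$ (for each line $L\subset\mathsf M_{\mathbb R}$, $\sum_{\beta_i\in L}\beta_i=0$); $\boldsymbol\Sigma=\{\sum a_i\beta_i:a_i\in[0,1]\}$ spans $\mathsf M_{\mathbb R}$ and the complement of the linear hyperplanes parallel to facets of $\boldsymbol\Sigma$ is nonempty. $\boldsymbol\nabla=\tfrac12\boldsymbol\Sigma$. $\mathcal H$ = affine hyperplanes $m+B$, $m\in\mathsf M$, $B\cap\boldsymbol\nabla$ a facet of $\boldsymbol\nabla$; adjacent pair: $\delta,\delta'$ avoid $\bigcup\mathcal H$ and exactly one member of $\mathcal H$ meets $[\delta,\delta']$. $\mathcal C_\delta=(\delta+\boldsymbol\nabla)\cap\mathsf M$. For $\chi\in\mathsf M$, $F_\chi(\delta_0)$ is the smallest face of $\delta_0+\boldsymbol\nabla$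 containing $\chi$, and $\mathcal C^F_\delta=\{\chi\in\mathcal C_\delta:\chi\in\partial(\delta_0+\boldsymbol\nabla),\ F_\chi(\delta_0)=F\}$. *)

(* Defs.v *)
(* M_R = 'rV[R]_n, M = integral row vectors. *)
From HB Require Import structures.
From mathcomp Require Import all_boot all_order all_algebra.
From mathcomp Require Import all_classical all_reals all_analysis.
Set Implicit Arguments. Unset Strict Implicit. Unset Printing Implicit Defensive.
Import Order.TTheory GRing.Theory Num.Theory.
Import numFieldNormedType.Exports.
Local Open Scope classical_set_scope.
Local Open Scope ring_scope.

Section Defs.
Variables (R : realType) (n : nat).
Notation V := 'rV[R]_n.

Definition in_lattice (x : V) : Prop := exists z : 'rV[int]_n, x = map_mx intr z.

Definition dotv (l x : V) : R := (x *m l^T) 0 0.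

Definition translate (t : V) (S : set V) : set V := [set t + y | y in S].

Definition segment (a b : V) : set V :=
  [set (1 - t) *: a + t *: b | t in `[0, 1]%classic].

Definition convex_set (S : set V) : Prop :=
  forall x y t, S x -> S y -> 0 <= t <= 1 -> S ((1 - t) *: x + t *: y).

Definition is_face (K F : set V) : Prop :=
  F `<=` K /\ convex_set F /\
  forall x y t, K x -> K y -> 0 < t < 1 -> F ((1 - t) *: x + t *: y) -> F x /\ F y.

Definition affdim_ge (F : set V) (k : nat) : Prop :=
  exists p : 'I_k.+1 -> V, (forall i, F (p i)) /\
    row_free (\matrix_(i < k) (p (lift ord0 i) - p ord0)).

Definition is_facet (K F : set V) : Prop :=
  is_face K F /\ affdim_ge F n.-1 /\ ~ affdim_ge F n.

Definition smallest_face (K : set V) (x : V) (F : set V) : Prop :=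
  is_face K F /\ F x /\ forall G, is_face K G -> G x -> F `<=` G.

Definition boundary (K : set V) : set V := closure K `\` interior K.

Definition affine_hyperplane (B : set V) : Prop :=
  exists (l : V) (c : R), l != 0 /\ B = [set x | dotv l x = c].

Definition linear_hyperplane (B : set V) : Prop :=
  exists l : V, l != 0 /\ B = [set x | dotv l x = 0].

(* S is contained in a translate of B (for a facet S and hyperplane B: parallel) *)
Definition parallel (S B : set V) : Prop := exists t : V, S `<=` translate t B.

Variables (d : nat) (beta : 'I_d -> 'rV[int]_n).
Definition betaR (i : 'I_d) : V := map_mx intr (beta i).

Definition quasi_symmetric : Prop :=
  forall v : V, v != 0 -> \sum_(i < d | (betaR i <= v)%MS) betaR i = 0.

Definition Sigma : set V :=
  [set \sum_(i < d) a i *: betaR i | a in [set a : 'I_d -> R | forall i, 0 <= a i <= 1]].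

Definition spans (S : set V) : Prop :=
  forall x : V, exists k (p : 'I_k -> V) (c : 'I_k -> R),
    (forall i, S (p i)) /\ x = \sum_(i < k) c i *: p i.

Definition generic_nonempty : Prop :=
  exists x : V, forall F B, is_facet Sigma F -> linear_hyperplane B -> parallel F B -> ~ B x.

Definition Nabla : set V := [set 2^-1 *: x | x in Sigma].

Definition hypH (B : set V) : Prop :=
  exists (m : V) (B0 : set V), in_lattice m /\ affine_hyperplane B0 /\
    is_facet Nabla (B0 `&` Nabla) /\ B = translate m B0.

Definition avoids_H (x : V) : Prop := forall B, hypH B -> ~ B x.

Definition intersects (A B : set V) : Prop := A `&` B !=set0.

Definition Cset (delta : V) : set V := translate delta Nabla `&` in_lattice.

Definition CFset (delta delta0 : V) (F : set V) : set V :=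
  [set chi | Cset delta chi /\ boundary (translate delta0 Nabla) chi /\
             smallest_face (translate delta0 Nabla) chi F].
End Defs.

Arguments betaR R [n d] beta i.
Arguments quasi_symmetric R [n d] beta.
Arguments Sigma R [n d] beta _.
Arguments generic_nonempty R [n d] beta.
Arguments Nabla R [n d] beta _.
Arguments hypH R [n d] beta B.
Arguments avoids_H R [n d] beta x.
Arguments Cset R [n d] beta delta _.
Arguments CFset R [n d] beta delta delta0 F _.

(* Main.v *)
Require Import Defs.
From HB Require Import structures.
From mathcomp Require Import all_boot all_order all_algebra.
From mathcomp Require Import all_classical all_reals all_analysis.
From mathcomp Require Import ring lra zify.
Set Implicit Arguments. Unset Strict Implicit. Unset Printing Implicit Defensive.
Import Order.TTheory GRing.Theory Num.Theory.
Import numFieldNormedType.Exports.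
Local Open Scope classical_set_scope.
Local Open Scope ring_scope.

Module L1.


Section Dot.
Variables (R : realType) (n : nat).
Implicit Types (l x y : 'rV[R]_n).

Lemma dotvE l x : dotv l x = \sum_k x 0 k * l 0 k.
Proof. by rewrite /dotv !mxE; apply: eq_bigr => k _; rewrite mxE. Qed.

Lemma dotvC l x : dotv l x = dotv x l.
Proof. by rewrite !dotvE; apply: eq_bigr => k _; rewrite mulrC. Qed.

Lemma dotvDr l x y : dotv l (x + y) = dotv l x + dotv l y.
Proof. by rewrite !dotvE -big_split; apply: eq_bigr => k _; rewrite mxE mulrDl. Qed.

Lemma dotvZr l a x : dotv l (a *: x) = a * dotv l x.
Proof. by rewrite !dotvE mulr_sumr; apply: eq_bigr => k _; rewrite mxE mulrA. Qed.

Lemma dotvDl l l' x : dotv (l + l') x = dotv l x + dotv l' x.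
Proof. by rewrite dotvC dotvDr !(dotvC x). Qed.

Lemma dotvZl l a x : dotv (a *: l) x = a * dotv l x.
Proof. by rewrite dotvC dotvZr dotvC. Qed.

Lemma dotv0r l : dotv l 0 = 0.
Proof. by rewrite -(scale0r 0) dotvZr mul0r. Qed.

Lemma dotv0l x : dotv 0 x = 0.
Proof. by rewrite dotvC dotv0r. Qed.

Lemma dotvNr l x : dotv l (- x) = - dotv l x.
Proof. by rewrite -scaleN1r dotvZr mulN1r. Qed.

Lemma dotvNl l x : dotv (- l) x = - dotv l x.
Proof. by rewrite dotvC dotvNr dotvC. Qed.

Lemma dotvBr l x y : dotv l (x - y) = dotv l x - dotv l y.
Proof. by rewrite dotvDr dotvNr. Qed.

Lemma dotvBl l l' x : dotv (l - l') x = dotv l x - dotv l' x.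
Proof. by rewrite dotvDl dotvNl. Qed.

Lemma dotv_sumr l (I : finType) (P : pred I) (F : I -> 'rV[R]_n) :
  dotv l (\sum_(i | P i) F i) = \sum_(i | P i) dotv l (F i).
Proof.
apply: (big_morph (dotv l)) => [x y|]; [exact: dotvDr| exact: dotv0r].
Qed.

Lemma dotv_ge0 l : 0 <= dotv l l.
Proof. by rewrite dotvE; apply: sumr_ge0 => k _; by rewrite -expr2 sqr_ge0. Qed.

Lemma dotv_eq0 l : dotv l l = 0 -> l = 0.
Proof.
rewrite dotvE => /psumr_eq0P H.
apply/matrixP => i k; rewrite [i]ord1 mxE.
have /eqP := H (fun j _ => ltac:(by rewrite -expr2 sqr_ge0)) k isT.
by rewrite mulf_eq0 orbb => /eqP.
Qed.

Lemma dotv_gt0 l : l != 0 -> 0 < dotv l l.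
Proof.
move=> nz; rewrite lt_neqAle dotv_ge0 andbT eq_sym.
by apply/eqP => /dotv_eq0 /eqP; rewrite (negbTE nz).
Qed.

Lemma dotv_ortho l : (forall x, dotv l x = 0) -> l = 0.
Proof. by move=> H; apply: dotv_eq0; apply: H. Qed.

End Dot.

End L1.
Import L1.

Module L2.


Section Farkas.
Variable (R : realType).

Lemma widen_lift m (k : 'I_m) : widen_ord (leqnSn m) k = lift ord_max k.
Proof. by apply: val_inj; rewrite /= /bump leqNgt ltn_ord. Qed.

Definition ext_last m (c : 'I_m -> R) (b : R) (j : 'I_m.+1) : R :=
  if unlift ord_max j is Some k then c k else b.

Lemma ext_last_w m c b (k : 'I_m) : ext_last c b (widen_ord (leqnSn m) k) = c k.
Proof. by rewrite /ext_last widen_lift liftK. Qed.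

Lemma ext_last_max m c b : @ext_last m c b ord_max = b.
Proof. by rewrite /ext_last unlift_none. Qed.

Lemma farkas (N m : nat) (g : 'I_m -> 'rV[R]_N) (v : 'rV[R]_N) :
  ~ (exists c : 'I_m -> R, (forall j, 0 <= c j) /\ v = \sum_j c j *: g j) ->
  exists l, (forall j, dotv l (g j) <= 0) /\ 0 < dotv l v.
Proof.
elim: m g v => [|m IH] g v Hc.
  have vnz : v != 0.
    apply/eqP => v0; apply: Hc; exists (fun _ => 0); split; first by [].
    by rewrite big_ord0.
  exists v; split; [by case| exact: dotv_gt0].
pose g' (j : 'I_m) := g (widen_ord (leqnSn m) j).
pose gl := g ord_max.
have Hc' : ~ (exists c : 'I_m -> R, (forall j, 0 <= c j) /\ v = \sum_j c j *: g' j).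
  move=> [c [c0 vE]]; apply: Hc; exists (ext_last c 0); split.
    by move=> j; rewrite /ext_last; case: unlift.
  rewrite big_ord_recr /= ext_last_max scale0r addr0 vE.
  by apply: eq_bigr => k _; rewrite ext_last_w.
have [x [hx1 hx2]] := IH g' v Hc'.
have gsplit : forall j : 'I_m.+1, j = ord_max \/ exists k, j = widen_ord (leqnSn m) k.
  move=> j; case: (unliftP ord_max j) => [k ->|->]; last by left.
  by right; exists k; rewrite widen_lift.
case: (lerP (dotv x gl) 0) => hgl.
  exists x; split => // j; case: (gsplit j) => [->|[k ->]] //; exact: hx1.
set al := dotv x gl.
pose g'' (j : 'I_m) := g' j - (dotv x (g' j) / al) *: gl.
pose v'' := v - (dotv x v / al) *: gl.
have Hc'' : ~ (exists c : 'I_m -> R, (forall j, 0 <= c j) /\ v'' = \sum_j c j *: g'' j).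
  move=> [c [c0 vE]]; apply: Hc.
  pose be := (dotv x v - \sum_k c k * dotv x (g' k)) / al.
  exists (ext_last c be); split.
    move=> j; rewrite /ext_last; case: unlift => [k|]; first exact: c0.
    rewrite /be divr_ge0 ?(ltW hgl) // subr_ge0; apply: le_trans (ltW hx2).
    rewrite -oppr_ge0 -sumrN; apply: sumr_ge0 => k _.
    by rewrite -mulrN mulr_ge0 // oppr_ge0.
  rewrite big_ord_recr /= ext_last_max.
  under eq_bigr => k _ do rewrite ext_last_w.
  have : v = v'' + (dotv x v / al) *: gl by rewrite /v'' subrK.
  move=> ->; rewrite vE /g'' /be.
  rewrite (eq_bigr (fun j => c j *: g' j - (c j * (dotv x (g' j) / al)) *: gl)); last first.
    by move=> j _; rewrite scalerBr scalerA.
  rewrite sumrB -scaler_suml mulrBl scalerBl.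
  have -> : \sum_i c i * (dotv x (g' i) / al) = (\sum_k c k * dotv x (g' k)) / al.
    by rewrite mulr_suml; apply: eq_bigr => k _; rewrite mulrA.
  by rewrite addrA addrAC.
have [y [hy1 hy2]] := IH g'' v'' Hc''.
have alnz : al != 0 by rewrite gt_eqF.
exists (y - (dotv y gl / al) *: x); split.
  move=> j; case: (gsplit j) => [->|[k ->]].
    by rewrite dotvBl dotvZl -/gl -/al mulfVK // subrr.
  rewrite dotvBl dotvZl; apply: le_trans (hy1 k).
  rewrite /g'' dotvBr dotvZr -/(g' k) (dotvC x (g' k)) (dotvC y gl) (dotvC y (g' k)).
  by rewrite mulrAC -mulrA mulrC le_refl.
rewrite dotvBl dotvZl.
suff -> : dotv y v - dotv y gl / al * dotv x v = dotv y v'' by [].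
by rewrite /v'' dotvBr dotvZr (dotvC x v); ring.
Qed.

End Farkas.

End L2.
Import L2.

Module L3.


Section Zono.
Variables (R : realType) (n d : nat) (beta : 'I_d -> 'rV[int]_n).
Notation V := 'rV[R]_n.

Definition gam (i : 'I_d) : V := 2^-1 *: betaR R beta i.
Definition hN (l : V) : R := \sum_i Num.max 0 (dotv l (gam i)).

Definition indep r (e : 'I_r -> V) :=
  forall c : 'I_r -> R, \sum_k c k *: e k = 0 -> forall k, c k = 0.

Definition FN (l : V) := l != 0 /\
  exists t : 'I_n.-1 -> 'I_d, (forall k, dotv l (gam (t k)) = 0) /\ indep (fun k => gam (t k)).

Lemma NablaP x : Nabla R beta x <->
  exists a : 'I_d -> R, (forall i, 0 <= a i <= 1) /\ x = \sum_i a i *: gam i.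
Proof.
split.
  case=> y [a Ha <-] <-; exists a; split => //.
  rewrite scaler_sumr; apply: eq_bigr => i _.
  by rewrite /gam !scalerA mulrC.
case=> a [Ha ->]; exists (\sum_i a i *: betaR R beta i); first by exists a.
rewrite scaler_sumr; apply: eq_bigr => i _.
by rewrite /gam !scalerA mulrC.
Qed.

Lemma nabla_le l x : Nabla R beta x -> dotv l x <= hN l.
Proof.
move=> /NablaP [a [Ha ->]]; rewrite dotv_sumr /hN; apply: ler_sum => i _.
rewrite dotvZr; have /andP [a0 a1] := Ha i.
case: ler0P => h.
  by rewrite mulr_ge0_le0.
nra.
Qed.

Lemma nabla_convex : Defs.convex_set (Nabla R beta).
Proof.
rewrite /Defs.convex_set => x y t hx; move: hx => /NablaP [a [Ha ->]] /NablaP [b [Hb ->]] /andP [t0 t1].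
apply/NablaP; exists (fun i => (1 - t) * a i + t * b i); split.
  move=> i; have /andP [a0 a1] := Ha i; have /andP [b0 b1] := Hb i.
  apply/andP; split; first by rewrite addr_ge0 // mulr_ge0 // subr_ge0.
  nra.
have -> : \sum_i ((1 - t) * a i + t * b i) *: gam i =
   \sum_i ((1-t) *: (a i *: gam i) + t *: (b i *: gam i)).
  by apply: eq_bigr => i _; rewrite scalerDl !scalerA.
by rewrite big_split /= !scaler_sumr.
Qed.

Lemma hN_scale a l : 0 <= a -> hN (a *: l) = a * hN l.
Proof.
move=> a0; rewrite /hN mulr_sumr; apply: eq_bigr => i _.
rewrite dotvZl; case: (ler0P (dotv l (gam i))) => h.
  by rewrite mulr0; apply/max_idPl; rewrite mulr_ge0_le0.
by rewrite (max_idPr _) // mulr_ge0 // ltW.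
Qed.

Lemma hN_opp l : \sum_i gam i = 0 -> hN (- l) = hN l.
Proof.
move=> s0; rewrite /hN.
have e : \sum_i - dotv l (gam i) = 0 by rewrite sumrN -dotv_sumr s0 dotv0r oppr0.
apply/eqP; rewrite -subr_eq0 -sumrB -[X in _ == X]e; apply/eqP.
apply: eq_bigr => i _; rewrite dotvNl.
case: (ler0P (dotv l (gam i))) => h.
  by rewrite (max_idPr _) ?oppr_ge0 // subr0.
by rewrite (max_idPl _) ?oppr_le0 ?ltW // sub0r.
Qed.

Lemma supp_face (K : set V) l c :
  Defs.convex_set K -> (forall x, K x -> dotv l x <= c) ->
  is_face K ([set x | dotv l x = c] `&` K).
Proof.
move=> cK le; split; first by move=> x [].
split.
  move=> x y t [/= hx Kx] [/= hy Ky] ht; split; last exact: cK.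
  by rewrite /= dotvDr !dotvZr hx hy; ring.
move=> x y t Kx Ky /andP [t0 t1] [/= e _].
have hx := le x Kx; have hy := le y Ky.
move: e; rewrite dotvDr !dotvZr => e.
have tx : dotv l x = c by nra.
have ty : dotv l y = c by nra.
by split; split.
Qed.

Lemma indep_row_free r (e : 'I_r -> V) : indep e -> row_free (\matrix_k e k).
Proof.
move=> ie; rewrite -kermx_eq0; apply/eqP/row_matrixP => i; rewrite row0.
have : row i (kermx (\matrix_k e k)) *m (\matrix_k e k) = 0.
  by apply/sub_kermxP/row_sub.
rewrite mulmx_sum_row.
under eq_bigr => k _ do rewrite rowK.
move=> /ie H; apply/matrixP => a b; rewrite [a]ord1 (H b) mxE.
by [].
Qed.

End Zono.

End L3.
Import L3.

Module L4.


Section Zono2.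
Variables (R : realType) (n d : nat) (beta : 'I_d -> 'rV[int]_n).
Notation V := 'rV[R]_n.
Notation bt := (betaR R beta).
Notation gam := (@gam R n d beta).
Notation hN := (@hN R n d beta).
Notation FN := (@FN R n d beta).

Lemma dotv_row m (A : 'M[R]_(m, n)) (l : V) i : (A *m l^T) i 0 = dotv l (row i A).
Proof. by rewrite /dotv -row_mul [in RHS]mxE. Qed.

Lemma facet_FN l : FN l -> is_facet (Nabla R beta) ([set x | dotv l x = hN l] `&` Nabla R beta).
Proof.
case=> lnz [t [ht it]].
split.
  apply: supp_face; [exact: nabla_convex | move=> x; exact: nabla_le].
pose a0 i : R := if 0 < dotv l (gam i) then 1 else 0.
have a01 i : 0 <= a0 i <= 1 by rewrite /a0; case: ifP => _; rewrite ?lexx ?ler01.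
pose p0 := \sum_i a0 i *: gam i.
have p0l : dotv l p0 = hN l.
  rewrite dotv_sumr /hN; apply: eq_bigr => i _; rewrite dotvZr /a0.
  by case: ler0P => h; rewrite ?mul0r ?mul1r // ltNge h.
split.
  have pjF j : dotv l (gam j) = 0 ->
      ([set x | dotv l x = hN l] `&` Nabla R beta) (p0 + gam j).
    move=> hj; split; first by rewrite /= dotvDr p0l hj addr0.
    apply/NablaP; exists (fun i => a0 i + (i == j)%:R); split.
      move=> i; case: (eqVneq i j) => [->|_].
        by rewrite /a0 hj ltxx add0r lexx ler01.
      by rewrite addr0.
    have -> : \sum_i (a0 i + (i == j)%:R) *: gam i =
        \sum_i (a0 i *: gam i + (i == j)%:R *: gam i).
      by apply: eq_bigr => i _; rewrite scalerDl.
    rewrite big_split /=; congr (_ + _).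
    rewrite (bigD1 j) //= eqxx scale1r big1 ?addr0 // => i /negbTE ->.
    by rewrite scale0r.
  exists (fun k => if unlift ord0 k is Some k' then p0 + gam (t k') else p0); split.
    move=> k; case: unlift => [k'|]; first exact: pjF.
    by split; [exact: p0l | apply/NablaP; exists a0].
  have -> : \matrix_(i < n.-1) ((if unlift ord0 (lift ord0 i) is Some k' then p0 + gam (t k') else p0)
      - (if unlift ord0 (@ord0 n.-1) is Some k' then p0 + gam (t k') else p0)) = \matrix_i gam (t i).
    by apply/row_matrixP => i; rewrite !rowK liftK unlift_none addrAC subrr add0r.
  exact: indep_row_free.
move=> [p [pF rf]].
pose D := \matrix_(i < n) (p (lift ord0 i) - p ord0).
have DL : D *m l^T = 0.
  apply/matrixP => i j; rewrite [j]ord1 dotv_row rowK dotvBr.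
  by rewrite (pF _).1 (pF _).1 subrr mxE.
have uD : D \in unitmx by rewrite -row_free_unit.
move/negP: lnz; apply; apply/eqP/trmx_inj; rewrite trmx0 -(mulKmx uD l^T).
by rewrite DL mulmx0.
Qed.

Lemma span_ortho : spans (Sigma R beta) -> forall u : V, (forall i, dotv u (gam i) = 0) -> u = 0.
Proof.
move=> hs u hu; apply: dotv_eq0.
have [k [p [c [pS ue]]]] := hs u.
rewrite {2}ue dotv_sumr big1 // => i _; rewrite dotvZr.
have [a _ <-] := pS i.
rewrite dotv_sumr big1 ?mulr0 // => j _; rewrite dotvZr.
have := hu j; rewrite /L3.gam dotvZr => /eqP; rewrite mulf_eq0 invr_eq0 pnatr_eq0 /= => /eqP ->.
by rewrite mulr0.
Qed.

Lemma bt_sym i j : bt i != 0 -> bt j != 0 -> (bt j <= bt i)%MS -> (bt i <= bt j)%MS.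
Proof.
move=> nzi nzj le; have := mxrank_leqif_eq le.
rewrite !rank_rV nzi nzj => -[_ /esym /andP []] //.
Qed.

Lemma sum_beta0 : quasi_symmetric R beta -> \sum_i bt i = 0.
Proof.
move=> qs.
suff H : forall k (A : {set 'I_d}), (#|A| <= k)%N ->
    (forall i j, i \in A -> bt i != 0 -> bt j != 0 -> (bt j <= bt i)%MS -> j \in A) ->
    \sum_(i in A) bt i = 0.
  rewrite -[RHS](H d (finset.setT) (ltac:(by rewrite cardsT card_ord)) (fun _ _ _ _ _ _ => finset.in_setT _)).
  by apply: eq_bigl => i; rewrite finset.in_setT.
elim=> [|k IH] A hA cl.
  move: hA; rewrite leqn0 => /eqP /cards0_eq ->; exact: big_set0.
case: (boolP [exists i in A, bt i != 0]) => [/existsP [i /andP [iA nz]] | /existsPn Hz]; last first.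
  by apply: big1 => i iA; have := Hz i; rewrite iA /= negbK => /eqP.
pose L := [set j : 'I_d | (bt j <= bt i)%MS]%SET.
rewrite (big_setID L) /=.
have -> : \sum_(j in A :&: L) bt j = 0.
  rewrite -[RHS](qs (bt i) nz) big_mkcond [RHS]big_mkcond; apply: eq_bigr => j _.
  rewrite finset.in_setI inE; case: (boolP (bt j <= bt i)%MS); rewrite ?andbF ?andbT // => le.
  case: (boolP (j \in A)) => // jA.
  case: (eqVneq (bt j) 0) => [->//|nzj].
  by rewrite (cl i j) in jA.
rewrite add0r; apply: (IH (A :\: L)).
  have : (0 < #|A :&: L|)%N.
    by apply/card_gt0P; exists i; rewrite finset.in_setI iA inE submx_refl.
  move: hA; rewrite cardsD; lia.
move=> a b; rewrite !finset.in_setD !inE => /andP [naL aA] nza nzb bla.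
apply/andP; split; last exact: (cl a b aA nza nzb bla).
apply/negP => bL; move/negP: naL; apply.
exact: submx_trans (bt_sym nza nzb bla) bL.
Qed.

Lemma sum_gam0 : quasi_symmetric R beta -> \sum_i gam i = 0.
Proof. by move=> qs; rewrite /L3.gam -scaler_sumr sum_beta0 // scaler0. Qed.

End Zono2.

End L4.
Import L4.

Module L5.


Definition fun0 (T : Type) (k : 'I_0) : T.
Proof. by case: k => m; rewrite ltn0. Defined.

Section Refine.
Variables (R : realType) (n d : nat) (beta : 'I_d -> 'rV[int]_n).
Notation V := 'rV[R]_n.
Notation gam := (@gam R n d beta).
Notation hN := (@hN R n d beta).
Notation FN := (@FN R n d beta).
Notation indep := (@indep R n).

Lemma exists_ortho r (e : 'I_r -> V) (w : V) : (r.+1 < n)%N ->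
  exists u : V, u != 0 /\ (forall k, dotv u (e k) = 0) /\ dotv u w = 0.
Proof.
move=> rn.
pose M : 'M[R]_(1 + r, n) := col_mx w (\matrix_k e k).
pose K := kermx M^T.
have Kn0 : K != 0.
  rewrite -mxrank_eq0 /K mxrank_ker mxrank_tr.
  have h : (\rank M <= r.+1)%N by exact: rank_leq_row.
  by apply/eqP => /eqP; rewrite subn_eq0 => h2; move: (leq_trans h2 h); rewrite leqNgt rn.
have [j nzj] : exists j, row j K != 0.
  case: (boolP [exists j, row j K != 0]) => [/existsP //|].
  rewrite negb_exists => /forallP H; move/negP: Kn0; case.
  by apply/eqP/row_matrixP => j; rewrite row0; move/negPn/eqP: (H j).
have uK : row j K *m M^T = 0 by apply/sub_kermxP/row_sub.
move: uK; rewrite /M tr_col_mx mul_mx_row -row_mx0 => /eq_row_mx [h1 h2].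
exists (row j K); split => //; split.
  move=> k; have : (\matrix_k e k) *m (row j K)^T = 0.
    by rewrite -[LHS]trmxK trmx_mul trmxK h2 trmx0.
  move/matrixP => /(_ k 0); rewrite dotv_row rowK mxE => <-.
  by rewrite dotvC.
by rewrite dotvC /dotv h1 mxE.
Qed.

Variables (up lo : 'I_d -> bool).
Hypothesis uplo : forall i, up i || lo i.
Hypothesis hsp : forall u : V, (forall i, dotv u (gam i) = 0) -> u = 0.

Definition inD (l : V) := forall i,
  (up i -> dotv l (gam i) <= 0) /\ (lo i -> 0 <= dotv l (gam i)).

Definition Jset (w' : V) (i : 'I_d) : bool :=
  (up i && (0 < dotv w' (gam i))) || (lo i && (dotv w' (gam i) < 0)).

Lemma refine_step (w : V) r (l : V) (t : 'I_r -> 'I_d) : (r < n.-1)%N ->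
  inD l -> 0 < dotv l w -> (forall k, dotv l (gam (t k)) = 0) -> indep (fun k => gam (t k)) ->
  exists l' (t' : 'I_r.+1 -> 'I_d), inD l' /\ 0 < dotv l' w /\
    (forall k, dotv l' (gam (t' k)) = 0) /\ indep (fun k => gam (t' k)).
Proof.
move=> rn Dl lw lt it.
have rn' : (r.+1 < n)%N by move: rn; case: n.
have [u [unz [ut uw]]] := exists_ortho (fun k => gam (t k)) w rn'.
have [w' [w't [w'w [i0 Ji0]]]] : exists w' : V, (forall k, dotv w' (gam (t k)) = 0) /\
    dotv w' w = 0 /\ exists i, Jset w' i.
  case: (boolP [exists i, Jset u i]) => [/existsP [i Ji]|nJu].
    by exists u; split => //; split => //; exists i.
  case: (boolP [exists i, Jset (- u) i]) => [/existsP [i Ji]|nJu'].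
    exists (- u); split; first by move=> k; rewrite dotvNl ut oppr0.
    by split; [rewrite dotvNl uw oppr0 | exists i].
  exfalso; move/negP: unz; apply; apply/eqP/hsp => i.
  move: nJu nJu'; rewrite !negb_exists => /forallP /(_ i) h1 /forallP /(_ i) h2.
  move: h1 h2; rewrite /Jset dotvNl oppr_gt0 oppr_lt0.
  have := uplo i.
  case: (ltrgt0P (dotv u (gam i))) => //;
    by case: (up i); case: (lo i).
pose s i := - dotv l (gam i) / dotv w' (gam i).
case: (arg_minP s Ji0) => ist Jis mins.
have w'nz : dotv w' (gam ist) != 0.
  by move: Jis; rewrite /Jset; case/orP => /andP [_ h]; [rewrite (gt_eqF h) | rewrite (lt_eqF h)].
have s0 : 0 <= s ist.
  move: Jis; rewrite /Jset /s; case/orP => /andP [hu hw].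
    by rewrite divr_ge0 ?oppr_ge0 ?(Dl ist).1 // ltW.
  by rewrite mulr_le0 ?oppr_le0 ?(Dl ist).2 // invr_le0 ltW.
pose l' := l + s ist *: w'.
have l'g i : dotv l' (gam i) = dotv l (gam i) + s ist * dotv w' (gam i).
  by rewrite /l' dotvDl dotvZl.
exists l', (fun k => if unlift ord0 k is Some k' then t k' else ist).
split.
  move=> i; rewrite l'g; split => hi.
    case: (lerP (dotv w' (gam i)) 0) => hw.
      have := (Dl i).1 hi; nra.
    have Ji : Jset w' i by rewrite /Jset hi hw.
    have := mins i Ji; rewrite /s => h.
    have e : - dotv l (gam i) / dotv w' (gam i) * dotv w' (gam i) = - dotv l (gam i).
      by rewrite divfK // gt_eqF.
    nra.
  case: (lerP 0 (dotv w' (gam i))) => hw.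
    have := (Dl i).2 hi; nra.
  have Ji : Jset w' i by rewrite /Jset hi hw orbT.
  have := mins i Ji; rewrite /s => h.
  have e : - dotv l (gam i) / dotv w' (gam i) * dotv w' (gam i) = - dotv l (gam i).
    by rewrite divfK // lt_eqF.
  nra.
split; first by rewrite /l' dotvDl dotvZl w'w mulr0 addr0.
split.
  move=> k; case: (unliftP ord0 k) => [k' _|_]; rewrite l'g.
    by rewrite lt w't mulr0 addr0.
  by rewrite /s divfK // subrr.
move=> c; rewrite big_ord_recl unlift_none.
under eq_bigr => k _ do rewrite liftK.
move=> e.
have c0 : c ord0 = 0.
  have := congr1 (dotv w') e; rewrite dotv0r dotvDr dotvZr dotv_sumr big1 ?addr0.
    by move/eqP; rewrite mulf_eq0 (negbTE w'nz) orbF => /eqP.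
  by move=> k _; rewrite dotvZr w't mulr0.
move: e; rewrite c0 scale0r add0r => /it h k.
by case: (unliftP ord0 k) => [k' ->|->].
Qed.

Lemma refine (w l : V) : inD l -> 0 < dotv l w -> exists l', inD l' /\ 0 < dotv l' w /\ FN l'.
Proof.
move=> Dl lw.
suff H : forall r, (r <= n.-1)%N -> exists l' (t : 'I_r -> 'I_d), inD l' /\ 0 < dotv l' w /\
    (forall k, dotv l' (gam (t k)) = 0) /\ indep (fun k => gam (t k)).
  have [l' [t [D1 [D2 [D3 D4]]]]] := H n.-1 (leqnn _).
  exists l'; split => //; split => //; split; last by exists t.
  by apply/eqP => l0; move: D2; rewrite l0 dotv0l ltxx.
elim=> [|r IH] rn.
  exists l, (@fun0 'I_d).
  by split => //; split => //; split => [[]//|c _ []].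
have [l1 [t1 [D1 [D2 [D3 D4]]]]] := IH (ltnW rn).
exact: (refine_step rn D1 D2 D3 D4).
Qed.

End Refine.

End L5.
Import L5.

Module L6.


Lemma split_l m k (i : 'I_m) : fintype.split (lshift k i) = inl i.
Proof. exact: (unsplitK (inl i)). Qed.
Lemma split_r m k (i : 'I_k) : fintype.split (rshift m i) = inr i.
Proof. exact: (unsplitK (inr i)). Qed.

Lemma dotv_row_mx (R : realType) n d (l : 'rV[R]_(n + d)) a b :
  dotv l (row_mx a b) = dotv (lsubmx l) a + dotv (rsubmx l) b.
Proof.
rewrite !dotvE big_split_ord /=; congr (_ + _); apply: eq_bigr => k _.
  by rewrite row_mxEl mxE.
by rewrite row_mxEr mxE.
Qed.

Lemma dotv_delta (R : realType) d (m : 'rV[R]_d) i : dotv m (delta_mx 0 i) = m 0 i.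
Proof.
rewrite dotvE (bigD1 i) //= big1 ?addr0 => [|k ki]; first by rewrite mxE !eqxx mul1r.
by rewrite mxE (negbTE ki) andbF mul0r.
Qed.

Lemma fin_min (R : realType) (I : finType) (f : I -> R) :
  (forall i, 0 < f i) -> exists e, 0 < e /\ forall i, e <= f i.
Proof.
move=> f0.
suff [e [e0 he]] : exists e, 0 < e /\ forall i, i \in enum I -> e <= f i.
  by exists e; split => // i; apply: he; rewrite mem_enum.
elim: (enum I) => [|i s [e [e0 he]]]; first by exists 1; split.
exists (Num.min (f i) e); split; first by rewrite lt_min f0 e0.
move=> j; rewrite inE => /orP [/eqP ->|js]; first by rewrite ge_min lexx.
by rewrite ge_min he ?orbT.
Qed.

Section HRep.
Variables (R : realType) (n d : nat) (beta : 'I_d -> 'rV[int]_n).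
Notation V := 'rV[R]_n.
Notation gam := (@gam R n d beta).
Notation hN := (@hN R n d beta).
Notation FN := (@FN R n d beta).
Notation indep := (@indep R n).

Lemma hrep_gen (x : V) : ~ Nabla R beta x -> exists l, hN l < dotv l x.
Proof.
move=> nx.
pose e (i : 'I_d) : 'rV[R]_d := delta_mx 0 i.
pose g (j : 'I_(d + d)) : 'rV[R]_(n + d) :=
  match fintype.split j with inl i => row_mx (gam i) (e i) | inr i => row_mx 0 (e i) end.
pose v : 'rV[R]_(n + d) := row_mx x (const_mx 1).
case: (pselect (exists c : 'I_(d + d) -> R, (forall j, 0 <= c j) /\ v = \sum_j c j *: g j)).
  move=> [c [c0 vE]]; exfalso; apply: nx; apply/NablaP.
  have E j0 : v 0 j0 = \sum_i c (lshift d i) * row_mx (gam i) (e i) 0 j0 +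
                       \sum_i c (rshift d i) * row_mx (0 : V) (e i) 0 j0.
    rewrite vE summxE big_split_ord /=; congr (_ + _); apply: eq_bigr => i _;
      by rewrite mxE /g ?split_l ?split_r.
  exists (fun i => c (lshift d i)); split.
    move=> i; rewrite c0 /=.
    have := E (rshift n i); rewrite /v row_mxEr mxE.
    rewrite (bigD1 i) //= big1 ?addr0; last first.
      by move=> k ki; rewrite row_mxEr mxE eqxx /= eq_sym (negbTE ki) mulr0.
    rewrite (bigD1 i) //= big1 ?addr0; last first.
      by move=> k ki; rewrite row_mxEr mxE eqxx /= eq_sym (negbTE ki) mulr0.
    rewrite !row_mxEr !mxE !eqxx !mulr1 => ->.
    by rewrite lerDl c0.
  apply/matrixP => a k; rewrite [a]ord1.
  have := E (lshift d k); rewrite /v row_mxEl => ->.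
  rewrite [X in _ + X]big1 ?addr0; last by move=> i _; rewrite row_mxEl mxE mulr0.
  rewrite summxE; apply: eq_bigr => i _.
  by rewrite row_mxEl [RHS]mxE.
move=> nc; have [L [L1 L2]] := farkas nc.
exists (lsubmx L).
have Ll i : dotv (lsubmx L) (gam i) + rsubmx L 0 i <= 0.
  by have := L1 (lshift d i); rewrite /g split_l dotv_row_mx dotv_delta.
have Lr i : rsubmx L 0 i <= 0.
  by have := L1 (rshift d i); rewrite /g split_r dotv_row_mx dotv_delta dotv0r add0r.
move: L2; rewrite /v dotv_row_mx => L2.
have eq1 : dotv (rsubmx L) (const_mx 1) = \sum_i rsubmx L 0 i.
  by rewrite dotvE; apply: eq_bigr => k _; rewrite mxE mul1r.
rewrite eq1 in L2.
have h1 : hN (lsubmx L) <= \sum_i - rsubmx L 0 i.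
  rewrite /L3.hN; apply: ler_sum => i _; rewrite ge_max oppr_ge0 Lr /=.
  by rewrite -subr_le0 opprK.
apply: (le_lt_trans h1).
by rewrite sumrN -subr_gt0 opprK.
Qed.

Hypothesis hsp : forall u : V, (forall i, dotv u (gam i) = 0) -> u = 0.

Lemma hN_D (up lo : 'I_d -> bool) l : (forall i, lo i = ~~ up i) -> inD beta up lo l ->
  hN l = \sum_(i | lo i) dotv l (gam i).
Proof.
move=> e Dl; rewrite /L3.hN [RHS]big_mkcond; apply: eq_bigr => i _.
case: ifP => loi.
  by apply/max_idPr; apply: (Dl i).2.
have upi : up i by move: loi; rewrite e => /negbFE.
by apply/max_idPl; apply: (Dl i).1.
Qed.

Lemma hrep_FN (x : V) : ~ Nabla R beta x -> exists l, FN l /\ hN l < dotv l x.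
Proof.
move=> /hrep_gen [l0 hl0].
pose up i := dotv l0 (gam i) <= 0.
pose lo i := ~~ up i.
have uplo i : up i || lo i by rewrite /lo orbN.
have Dl0 : inD beta up lo l0.
  by move=> i; split => //; rewrite /lo /up -ltNge => /ltW.
pose w := x - \sum_(i | lo i) gam i.
have hw l : inD beta up lo l -> dotv l w = dotv l x - hN l.
  by move=> Dl; rewrite (@hN_D up lo) // /w dotvBr dotv_sumr.
have := @refine R n d beta up lo uplo hsp w l0 Dl0.
rewrite hw // subr_gt0 => /(_ hl0) [l' [Dl' [wl' FNl']]].
by exists l'; split => //; rewrite -subr_gt0 -hw.
Qed.

Lemma exitA (q v : V) : Nabla R beta q -> (forall e, 0 < e -> ~ Nabla R beta (q + e *: v)) ->
  exists l, FN l /\ dotv l q = hN l /\ 0 < dotv l v.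
Proof.
move=> /NablaP [a [a01 qE]] nex.
pose g (j : 'I_(d + d)) : V :=
  match fintype.split j with inl i => if a i < 1 then gam i else 0
                        | inr i => if 0 < a i then - gam i else 0 end.
case: (pselect (exists c : 'I_(d + d) -> R, (forall j, 0 <= c j) /\ v = \sum_j c j *: g j)).
  move=> [c [c0 vE]]; exfalso.
  pose bl i := if a i < 1 then c (lshift d i) else 0.
  pose br i := if 0 < a i then c (rshift d i) else 0.
  pose b i := bl i - br i.
  have vb : v = \sum_i b i *: gam i.
    rewrite vE big_split_ord /= /b.
    under [in RHS]eq_bigr => i _ do rewrite scalerBl.
    rewrite sumrB; congr (_ + _).
      by apply: eq_bigr => i _; rewrite /g split_l /bl; case: ifP; rewrite ?scale0r ?scaler0.
    rewrite -sumrN; apply: eq_bigr => i _; rewrite /g split_r /br.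
    by case: ifP; rewrite ?scale0r ?scaler0 ?oppr0 // scalerN.
  pose ei i := if 0 < b i then (1 - a i) / b i else if b i < 0 then a i / (- b i) else 1.
  have bl0 i : 0 <= bl i by rewrite /bl; case: ifP.
  have br0 i : 0 <= br i by rewrite /br; case: ifP.
  have blz i : ~~ (a i < 1) -> bl i = 0 by rewrite /bl => /negbTE ->.
  have brz i : ~~ (0 < a i) -> br i = 0 by rewrite /br => /negbTE ->.
  have ei0 i : 0 < ei i.
    rewrite /ei; case: ifP => hb.
      have : a i < 1.
        apply/negP => /negP /blz h; move: hb; rewrite /b h sub0r oppr_gt0.
        by rewrite ltNge br0.
      by move=> ha; rewrite divr_gt0 // subr_gt0.
    case: ifP => hb' //.
    have : 0 < a i.
      apply/negP => /negP /brz h; move: hb'; rewrite /b h subr0.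
      by rewrite ltNge bl0.
    by move=> ha; rewrite divr_gt0 // oppr_gt0.
  have [ep [ep0 epl]] := fin_min ei0.
  apply: (nex ep ep0); apply/NablaP.
  exists (fun i => a i + ep * b i); split; last first.
    have -> : \sum_i (a i + ep * b i) *: gam i = \sum_i (a i *: gam i + ep *: (b i *: gam i)).
      by apply: eq_bigr => i _; rewrite scalerDl (scalerA ep (b i) (gam i)).
    by rewrite big_split /= -scaler_sumr qE vb.
  move=> i; have := epl i; have := a01 i; rewrite /ei => /andP [ha0 ha1].
  case: (ltrgt0P (b i)) => hb.
  - move=> h; have e1 : (1 - a i) / b i * b i = 1 - a i by rewrite divfK // gt_eqF.
    by apply/andP; split; nra.
  - move=> h; have e1 : a i / - b i * b i = - a i.
      by rewrite invrN mulrN mulNr divfK // lt_eqF.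
    by apply/andP; split; nra.
  - by rewrite hb mulr0 addr0 ha0 ha1.
move=> nc; have [l [l1 l2]] := farkas nc.
pose up i := a i < 1.
pose lo i := 0 < a i.
have uplo i : up i || lo i.
  rewrite /up /lo; case: (ltP (a i) 1) => //= h.
  by apply: lt_le_trans h; exact: ltr01.
have Dl : inD beta up lo l.
  move=> i; split => h.
    by have := l1 (lshift d i); rewrite /up in h; rewrite /g split_l h.
  by have := l1 (rshift d i); rewrite /lo in h; rewrite /g split_r h dotvNr oppr_le0.
have [l' [Dl' [vl' FNl']]] := @refine R n d beta up lo uplo hsp v l Dl l2.
exists l'; split => //; split => //.
rewrite qE dotv_sumr /L3.hN; apply: eq_bigr => i _; rewrite dotvZr.
have := a01 i => /andP [ha0 ha1].
case: (ltrgt0P (dotv l' (gam i))) => hx.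
- have : ~~ up i by apply/negP => /((Dl' i).1); rewrite leNgt hx.
  rewrite /up -leNgt => h1.
  have -> : a i = 1 by apply/le_anti; rewrite ha1 h1.
  by rewrite mul1r.
- have : ~~ lo i by apply/negP => /((Dl' i).2); rewrite leNgt hx.
  rewrite /lo -leNgt => h1.
  have -> : a i = 0 by apply/le_anti; rewrite ha0 h1.
  by rewrite mul0r.
- by rewrite hx mulr0.
Qed.

End HRep.

End L6.
Import L6.

Module L7.


Fixpoint fbf (R : realType) n (p : nat -> 'rV[R]_n) (j : nat) : 'rV[R]_n :=
  if j is j'.+1 then 2^-1 *: (fbf p j' + p j) else p 0%N.

Section Geo.
Variables (R : realType) (n d : nat) (beta : 'I_d -> 'rV[int]_n).
Notation V := 'rV[R]_n.
Notation gam := (@gam R n d beta).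
Notation hN := (@hN R n d beta).
Notation FN := (@FN R n d beta).
Notation N := (Nabla R beta).

Lemma translateP (t : V) (S : set V) x : translate t S x <-> S (x - t).
Proof.
split; first by case=> y Sy <-; rewrite addrAC subrr add0r.
by move=> h; exists (x - t) => //; rewrite addrC subrK.
Qed.

Lemma FN_opp l : FN l -> FN (- l).
Proof.
case=> lnz [t [ht it]]; split; first by rewrite oppr_eq0.
by exists t; split => // k; rewrite dotvNl ht oppr0.
Qed.

Lemma hyp_of_FN l chi : \sum_i gam i = 0 -> FN l -> in_lattice chi ->
  hypH R beta [set x | dotv l x = dotv l chi - hN l].
Proof.
move=> s0 FNl lc.
exists chi, [set x | dotv (- l) x = hN (- l)]; split => //; split.
  exists (- l), (hN (- l)); split => //; rewrite oppr_eq0; exact: FNl.1.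
split; first exact/facet_FN/FN_opp.
apply/seteqP; split => x /=.
  move=> hx; apply/translateP => /=.
  by rewrite hN_opp // dotvNl dotvBr hx; ring.
move/translateP => /=; rewrite hN_opp // dotvNl dotvBr => hx.
by rewrite -hx; ring.
Qed.

Lemma hyp_form B : hypH R beta B -> exists l c, l != 0 /\ B = [set x | dotv l x = c].
Proof.
case=> m [B0 [_ [[l [c [lnz ->]]] [_ ->]]]].
exists l, (c + dotv l m); split => //.
apply/seteqP; split => x /=.
  by move/translateP => /=; rewrite dotvBr => <-; rewrite subrK.
by move=> hx; apply/translateP => /=; rewrite dotvBr hx addrK.
Qed.

Lemma par_hyp (l l0 : V) c c0 p : l0 != 0 ->
  [set x | dotv l x = c] = [set x | dotv l0 x = c0] -> dotv l0 p = c0 ->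
  exists a, l = a *: l0.
Proof.
move=> l0nz e pp.
have Pp : dotv l p = c by have : [set x | dotv l0 x = c0] p by []; rewrite -e.
have l0p := dotv_gt0 l0nz.
exists (dotv l l0 / dotv l0 l0).
apply/eqP; rewrite -subr_eq0; apply/eqP/dotv_ortho => w.
pose z := w - (dotv l0 w / dotv l0 l0) *: l0.
have z0 : dotv l0 z = 0.
  by rewrite /z dotvBr dotvZr divfK ?gt_eqF // subrr.
have : [set x | dotv l0 x = c0] (p + z) by rewrite /= dotvDr z0 addr0.
rewrite -e /= dotvDr Pp => /eqP; rewrite -subr_eq0 addrAC subrr add0r => /eqP.
rewrite /z dotvBr dotvZr => h.
rewrite dotvBl dotvZl (dotvC l0 w).
have hl : dotv l w = dotv w l0 / dotv l0 l0 * dotv l l0.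
  by rewrite (dotvC w l0); apply/eqP; rewrite -subr_eq0 h.
rewrite hl; field; rewrite gt_eqF //.
Qed.

Lemma translate_convex (t : V) S : Defs.convex_set S -> Defs.convex_set (translate t S).
Proof.
move=> cS x y s /translateP hx /translateP hy hs; apply/translateP.
have -> : (1 - s) *: x + s *: y - t = (1 - s) *: (x - t) + s *: (y - t).
  by rewrite !scalerBr addrACA -opprD -scalerDl subrK scale1r.
exact: cS.
Qed.

Lemma faceK (d0 l : V) :
  is_face (translate d0 N) ([set x | dotv l x = hN l + dotv l d0] `&` translate d0 N).
Proof.
apply: supp_face; first exact/translate_convex/nabla_convex.
move=> x /translateP /(nabla_le l); rewrite dotvBr.
by rewrite lerBlDr.
Qed.

Lemma fb_in (F : set V) k (p : 'I_k.+1 -> V) : Defs.convex_set F -> (forall i, F (p i)) ->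
  forall j, F (fbf (fun j => p (inord j)) j).
Proof.
move=> cF pF; elim=> [|j IH] /=; first exact: pF.
have -> : 2^-1 *: (fbf (fun j => p (inord j)) j + p (inord j.+1)) =
    (1 - 2^-1) *: fbf (fun j => p (inord j)) j + 2^-1 *: p (inord j.+1).
  have -> : (1 - 2^-1 : R) = 2^-1 by field.
  by rewrite scalerDr.
apply: cF => //.
by apply/andP; split; rewrite ?invr_ge0 ?ler0n // invf_le1 // ler1n.
Qed.

Lemma fb_face (K F G : set V) k (p : 'I_k.+1 -> V) : Defs.convex_set F -> F `<=` K ->
  (forall i, F (p i)) -> is_face K G ->
  forall j, G (fbf (fun j => p (inord j)) j) -> forall i : nat, (i <= j)%N -> G (p (inord i)).
Proof.
move=> cF FK pF [_ [_ fG]]; elim=> [|j IH] /= Gj i.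
  by rewrite leqn0 => /eqP ->; exact: Gj.
have [G1 G2] : G (fbf (fun j => p (inord j)) j) /\ G (p (inord j.+1)).
  apply: (fG _ _ 2^-1); [exact/FK/(fb_in cF pF) | exact/FK/pF | | ].
    by apply/andP; split; rewrite ?invr_gt0 ?ltr0n // invf_lt1 // ltr1n.
  have -> : (1 - 2^-1 : R) = 2^-1 by field.
  by rewrite -scalerDr.
rewrite leq_eqVlt => /orP [/eqP ->|]; first exact: G2.
by rewrite ltnS; apply: IH.
Qed.

Lemma par_pts (p : 'I_n.-1.+1 -> V) (lH l3 : V) cF c3 :
  row_free (\matrix_(i < n.-1) (p (lift ord0 i) - p ord0)) -> lH != 0 ->
  (forall i, dotv lH (p i) = cF) -> (forall i, dotv l3 (p i) = c3) ->
  exists a, l3 = a *: lH.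
Proof.
set D := \matrix_(i < n.-1) _ => rf lnz hH h3.
have n0 : (0 < n)%N.
  case: n lH lnz {p D rf hH h3} => // lH; rewrite (thinmx0 lH) eqxx //.
have DL (l : V) c : (forall i, dotv l (p i) = c) -> (l <= kermx D^T)%MS.
  move=> hl; apply/sub_kermxP; apply: trmx_inj; rewrite trmx_mul trmxK trmx0.
  apply/matrixP => i j; rewrite [j]ord1 dotv_row /D rowK dotvBr !hl subrr mxE.
  reflexivity.
have rK : \rank (kermx D^T) = 1%N.
  rewrite mxrank_ker mxrank_tr; move/eqP: rf => ->.
  by rewrite -{1}(prednK n0) subSnn.
have sH := DL _ _ hH; have s3 := DL _ _ h3.
have := mxrank_leqif_eq sH; rewrite rK rank_rV lnz => -[_ /esym /andP [_ KH]].
have [D' ->] := submxP (submx_trans s3 KH).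
exists (D' 0 0); by rewrite {1}(mx11_scalar D') mul_scalar_mx.
Qed.

End Geo.

End L7.
Import L7.

Module L8.


Section Aux.
Variables (R : realType) (n : nat).
Notation V := 'rV[R]_n.

Lemma segP (a b y : V) : segment a b y <-> exists t, 0 <= t <= 1 /\ y = (1 - t) *: a + t *: b.
Proof.
split; first by case=> t ht <-; move: ht; rewrite /= in_itv /= => ht; exists t.
by case=> t [ht ->]; exists t => //=; rewrite in_itv.
Qed.

Lemma cross (L A B : V) c : dotv L A <= c -> c < dotv L B ->
  exists t, 0 <= t <= 1 /\ dotv L ((1 - t) *: A + t *: B) = c.
Proof.
move=> hA hB.
have hp : 0 < dotv L B - dotv L A by rewrite subr_gt0; exact: le_lt_trans hB.
exists ((c - dotv L A) / (dotv L B - dotv L A)); split.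
  apply/andP; split; first by apply: divr_ge0; [rewrite subr_ge0 | exact: ltW].
  by rewrite ler_pdivrMr // mul1r; lra.
rewrite dotvDr !dotvZr; field; by rewrite gt_eqF.
Qed.

Lemma comb_id (x y : V) e : 0 < e ->
  (1 - (1 + e)^-1) *: x + (1 + e)^-1 *: (y + e *: (y - x)) = y.
Proof.
move=> e0; have h : 0 < 1 + e by lra.
apply/matrixP => i j; rewrite !mxE; field.
by rewrite gt_eqF.
Qed.

Lemma inv1e (e : R) : 0 < e -> 0 < (1 + e)^-1 < 1.
Proof.
move=> e0; have h : 0 < 1 + e by lra.
rewrite invr_gt0 h /= invf_lt1 //; lra.
Qed.

End Aux.

Section Main.
Variables (R : realType) (n d : nat) (beta : 'I_d -> 'rV[int]_n).
Notation V := 'rV[R]_n.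
Notation gam := (@gam R n d beta).
Notation hN := (@hN R n d beta).
Notation FN := (@FN R n d beta).
Notation N := (Nabla R beta).
Hypothesis hqs : quasi_symmetric R beta.
Hypothesis hspan : spans (Sigma R beta).

Let s0 : \sum_i gam i = 0 := sum_gam0 hqs.
Let hsp := span_ortho hspan.

Lemma exitK (d0 x v : V) : translate d0 N x ->
  ~ (exists e, 0 < e /\ translate d0 N (x + e *: v)) ->
  exists l, FN l /\ dotv l (x - d0) = hN l /\ 0 < dotv l v.
Proof.
move=> /translateP Nx ne; apply: (exitA hsp Nx) => e ep Ne; apply: ne.
by exists e; split => //; apply/translateP; rewrite addrAC.
Qed.

Variables (delta delta' delta0 : V) (H F : set V).
Hypotheses (hd : avoids_H R beta delta) (hd' : avoids_H R beta delta') (hH : hypH R beta H).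
Hypothesis hHuniq : forall B, hypH R beta B -> intersects (segment delta delta') B -> B = H.
Hypotheses (hd0 : segment delta delta' delta0) (hd0H : H delta0).
Hypotheses (hF : is_facet (translate delta0 N) F) (hFpar : parallel F H)
  (hFmeet : intersects F (translate delta N)).
Notation K := (translate delta0 N).

Lemma orient : exists lH cH, lH != 0 /\ H = [set x | dotv lH x = cH] /\ cH < dotv lH delta.
Proof.
have [l [c [lnz He]]] := hyp_form hH.
have nd : dotv l delta != c.
  by apply/eqP => e; apply: (hd hH); rewrite He.
case: (ltrgtP (dotv l delta) c) => h.
- exists (- l), (- c); split; first by rewrite oppr_eq0.
  split; last by rewrite dotvNl ltrN2.
  rewrite He; apply/seteqP; split => x /=; rewrite dotvNl; first by move=> ->.
  exact: oppr_inj.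
- by exists l, c.
- by rewrite h eqxx in nd.
Qed.

Variables (lH : V) (cH : R).
Hypotheses (lHnz : lH != 0) (He : H = [set x | dotv lH x = cH]) (hor : cH < dotv lH delta).

Lemma d0H : dotv lH delta0 = cH.
Proof. by move: hd0H; rewrite He. Qed.

Lemma d'side : dotv lH delta' < cH.
Proof.
have [s [/andP [s0' s1] e]] := (segP _ _ _).1 hd0.
have nd : dotv lH delta' != cH.
  by apply/eqP => e'; apply: (hd' hH); rewrite He.
have := d0H; rewrite e dotvDr !dotvZr => e2.
case: (ltrgtP (dotv lH delta') cH) => h //.
  have h1 : 0 <= (1 - s) * (dotv lH delta - cH) by rewrite mulr_ge0 // subr_ge0 // ltW.
  have h2 : 0 <= s * (dotv lH delta' - cH) by rewrite mulr_ge0 // subr_ge0 // ltW.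
  have h3 : (1 - s) * (dotv lH delta - cH) + s * (dotv lH delta' - cH) = 0.
    by rewrite -e2; ring.
  move: h1 h2 h3; set p1 := (1 - s) * _; set p2 := s * _ => h1 h2 h3.
  have p10 : p1 = 0 by lra.
  have p20 : p2 = 0 by lra.
  move/eqP: p10; rewrite mulf_eq0 subr_eq0 => /orP [/eqP s1'|]; last first.
    by rewrite subr_eq0 => /eqP hh; move: hor; rewrite hh ltxx.
  move/eqP: p20; rewrite /p2 -s1' mul1r subr_eq0 => /eqP hh.
  by move: h; rewrite hh ltxx.
by rewrite h eqxx in nd.
Qed.

Lemma seg_unique y : segment delta delta' y -> H y -> y = delta0.
Proof.
move=> /segP [t [ht ey]]; rewrite He /= => hy.
have [s [hs es]] := (segP _ _ _).1 hd0.
have e1 := d0H; rewrite es dotvDr !dotvZr in e1.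
rewrite ey dotvDr !dotvZr in hy.
have hts : (t - s) * (dotv lH delta' - dotv lH delta) = 0.
  by rewrite -[RHS](subrr cH) -{1}hy -e1; ring.
have := d'side => h'.
move/eqP: hts; rewrite mulf_eq0 subr_eq0 => /orP [/eqP ts|].
  by rewrite ey es ts.
by rewrite subr_eq0 => /eqP h; move: h' hor; rewrite h => h1 h2; have := lt_trans h1 h2; rewrite ltxx.
Qed.

Lemma seg_hyp B y : hypH R beta B -> B y -> segment delta delta' y -> B = H /\ y = delta0.
Proof.
move=> hB By sy.
have BH : B = H by apply: hHuniq => //; exists y.
by split => //; apply: seg_unique => //; rewrite -BH.
Qed.

Lemma seg_comb t : 0 <= t <= 1 -> segment delta delta' ((1 - t) *: delta + t *: delta0).
Proof.
move=> /andP [t0 t1]; have [s [/andP [s0' s1] es]] := (segP _ _ _).1 hd0.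
apply/segP; exists (t * s); split.
  by apply/andP; split; [exact: mulr_ge0 | rewrite mulr_ile1].
rewrite es; apply/matrixP => i j; rewrite !mxE; ring.
Qed.

Lemma hN_lH_par (l : V) a : l = a *: lH -> FN l ->
  dotv l delta <= dotv l delta0 -> 0 < a -> False.
Proof.
move=> -> FNl; rewrite !dotvZl d0H => h a0.
have := hor; rewrite -(ltr_pM2l a0) => h2.
by have := le_lt_trans h h2; rewrite ltxx.
Qed.

Lemma step12 chi : Cset R beta delta chi -> ~ Cset R beta delta' chi ->
  K chi /\ dotv lH (chi - delta0) = hN lH.
Proof.
move=> [td lat] nC'.
have nN' : ~ N (chi - delta').
  by move=> h; apply: nC'; split => //; apply/translateP.
have Nd : N (chi - delta) by apply/translateP.
have [l [FNl hl]] := hrep_FN hsp nN'.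
have le1 := nabla_le l Nd.
have [t [ht et]] : exists t, 0 <= t <= 1 /\
    dotv (- l) ((1 - t) *: delta + t *: delta') = hN l - dotv l chi.
  apply: cross; rewrite !dotvNl.
    by move: le1; rewrite dotvBr; lra.
  by move: hl; rewrite dotvBr; lra.
set y := (1 - t) *: delta + t *: delta' in et.
have Py : [set x | dotv l x = dotv l chi - hN l] y.
  by rewrite /= -[dotv l y]opprK -dotvNl et; ring.
have [PH yd0] := seg_hyp (hyp_of_FN s0 FNl lat) Py (ltac:(by apply/segP; exists t)).
have ld0 : dotv l delta0 = dotv l chi - hN l by rewrite -yd0.
have [a la] := par_hyp lHnz (etrans PH He) d0H.
have dd : dotv l delta0 <= dotv l delta by move: le1; rewrite dotvBr ld0; lra.
have a0 : 0 < a.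
  case: (ltrgt0P a) => // ha.
    exfalso; move: dd; rewrite la !dotvZl d0H.
    by rewrite ler_nM2l // leNgt hor.
  by exfalso; move: FNl => [+ _]; rewrite la ha scale0r eqxx.
split; last first.
  have := ld0; rewrite la !dotvZl hN_scale ?ltW // => h.
  apply: (mulfI (negbT (gt_eqF a0))); rewrite dotvBr mulrBr h; ring.
apply/translateP; apply: contrapT => nN0.
have [l2 [FNl2 hl2]] := hrep_FN hsp nN0.
have le2 := nabla_le l2 Nd.
have [t2 [ht2 et2]] : exists t, 0 <= t <= 1 /\
    dotv (- l2) ((1 - t) *: delta + t *: delta0) = hN l2 - dotv l2 chi.
  apply: cross; rewrite !dotvNl.
    by move: le2; rewrite dotvBr; lra.
  by move: hl2; rewrite dotvBr; lra.
set y2 := (1 - t2) *: delta + t2 *: delta0 in et2.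
have Py2 : [set x | dotv l2 x = dotv l2 chi - hN l2] y2.
  by rewrite /= -[dotv l2 y2]opprK -dotvNl et2; ring.
have [_ y2d0] := seg_hyp (hyp_of_FN s0 FNl2 lat) Py2 (seg_comb ht2).
move: hl2 Py2; rewrite y2d0 /= dotvBr => h1 h2; lra.
Qed.

Lemma FS : exists (p : 'I_n.-1.+1 -> V) (f0 : V),
  row_free (\matrix_(i < n.-1) (p (lift ord0 i) - p ord0)) /\ (forall i, F (p i)) /\ F f0 /\
  (forall G, is_face K G -> G f0 -> forall i, G (p i)) /\
  (forall f, F f -> dotv lH f = dotv lH delta0 + hN lH).
Proof.
case: hF => faceF [[p [pF rf]] _].
have [FK [cF fG]] := faceF.
case: hFpar => t0 Ft0.
have lHF f : F f -> dotv lH f = cH + dotv lH t0.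
  by move=> /Ft0 /translateP; rewrite He /= dotvBr => h; rewrite -h; ring.
pose f0 := fbf (fun j => p (inord j)) n.-1.
have Ff0 : F f0 := fb_in cF pF n.-1.
have fall G : is_face K G -> G f0 -> forall i, G (p i).
  move=> fGG Gf0 i; rewrite -(inord_val i); exact: (fb_face cF FK pF fGG Gf0 (leq_ord i)).
have key : exists l3, FN l3 /\ dotv l3 (f0 - delta0) = hN l3.
  case: (pselect (exists e, 0 < e /\ K (f0 + e *: lH))) => [[e1 [e1p K1]]|n1]; last first.
    by have [l3 [? [? _]]] := exitK (FK _ Ff0) n1; exists l3.
  case: (pselect (exists e, 0 < e /\ K (f0 + e *: - lH))) => [[e2 [e2p K2]]|n2]; last first.
    by have [l3 [? [? _]]] := exitK (FK _ Ff0) n2; exists l3.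
  exfalso.
  have e12 : 0 < e1 + e2 by lra.
  pose t := e1 / (e1 + e2).
  have t01 : 0 < t < 1.
    by rewrite divr_gt0 //= ltr_pdivrMr // mul1r; lra.
  have ef : (1 - t) *: (f0 + e1 *: lH) + t *: (f0 + e2 *: - lH) = f0.
    apply/matrixP => i j; rewrite !mxE /t; field; by rewrite gt_eqF.
  have := fG _ _ t K1 K2 t01; rewrite ef => /(_ Ff0) [F1 _].
  have h1 := lHF _ F1; rewrite dotvDr dotvZr (lHF _ Ff0) in h1.
  have : e1 * dotv lH lH = 0.
    by apply: (addrI (cH + dotv lH t0)); rewrite addr0.
  move/eqP; rewrite mulf_eq0 (gt_eqF e1p) /= => /eqP /dotv_eq0 l0.
  by move: lHnz; rewrite l0 eqxx.
have [l3 [FNl3 hl3]] := key.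
have F3 : ([set x | dotv l3 x = hN l3 + dotv l3 delta0] `&` K) f0.
  by split; [rewrite /= -hl3 dotvBr subrK | exact: FK].
have F3p i := (fall _ (faceK _ _ _) F3 i).1.
have [a la] := par_pts rf lHnz (fun i => lHF _ (pF i)) F3p.
have hp0 := F3p ord0; rewrite /= la !dotvZl in hp0.
have X : dotv lH (p ord0) = dotv lH delta0 + hN lH.
  case: (ltrgt0P a) => ha.
  - have e3 : hN (a *: lH) = a * hN lH by rewrite hN_scale //; apply: ltW.
    rewrite e3 in hp0.
    by apply: (mulfI (negbT (gt_eqF ha))); rewrite mulrDr hp0; ring.
  - exfalso.
    have e3 : hN (a *: lH) = (- a) * hN lH.
      have -> : a *: lH = (- a) *: (- lH) by rewrite scaleNr scalerN opprK.
      rewrite hN_scale; last by rewrite oppr_ge0; apply: ltW.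
      by rewrite hN_opp.
    rewrite e3 in hp0.
    have hX : dotv lH (p ord0) = - hN lH + dotv lH delta0.
      by apply: (mulfI (negbT (lt_eqF ha))); rewrite mulrDr hp0; ring.
    case: hFmeet => y [Fy /translateP Ny].
    have := nabla_le (- lH) Ny; rewrite hN_opp // dotvNl dotvBr.
    rewrite (lHF _ Fy) -(lHF _ (pF ord0)) hX d0H => h.
    have := hor; lra.
  - by exfalso; move: FNl3 => [+ _]; rewrite la ha scale0r eqxx.
exists p, f0; split => //; split => //; split => //; split => //.
by move=> f Ff; rewrite (lHF _ Ff) -(lHF _ (pF ord0)) X.
Qed.

Lemma dir1 chi : CFset R beta delta delta0 F chi ->
  (Cset R beta delta `\` Cset R beta delta') chi.
Proof.
move=> [Cd [_ [_ [Fchi _]]]]; split => // -[/translateP Nd' _].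
have [p [f0 [_ [_ [_ [_ FL]]]]]] := FS.
have := nabla_le lH Nd'; rewrite dotvBr FL // d0H => h.
have := d'side; lra.
Qed.

Lemma dir2 chi : (Cset R beta delta `\` Cset R beta delta') chi ->
  CFset R beta delta delta0 F chi.
Proof.
move=> [Cd nCd']; have [Kchi hchi] := step12 Cd nCd'.
have [_ lat] := Cd.
have [p [f0 [rf [pF [Ff0 [fall FL]]]]]] := FS.
case: hF => faceF _; have [FK [cF fG]] := faceF.
have lHchi : dotv lH chi = dotv lH delta0 + hN lH by move: hchi; rewrite dotvBr; lra.
split => //; split.
  split; first exact: subset_closure.
  move=> /nbhs_ballP [e e0 be].
  pose ep := e / (`|lH| + 1).
  have n0 : 0 <= `|lH| by [].
  have n1 : 0 < `|lH| + 1 by lra.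
  have ep0 : 0 < ep by rewrite divr_gt0.
  have epe : ep * (`|lH| + 1) = e by rewrite divfK // gt_eqF.
  have : K (chi + ep *: lH).
    apply: be; rewrite -ball_normE /ball_ /= opprD addrA subrr add0r normrN normrZ.
    by rewrite gtr0_norm //; nra.
  move=> /translateP /(nabla_le lH); rewrite addrAC dotvDr dotvZr hchi.
  have := dotv_gt0 lHnz => hp h; nra.
split => //; split.
  case: (pselect (exists e, 0 < e /\ K (f0 + e *: (f0 - chi)))) => [[e [e0 Ke]]|ne].
    have := fG _ _ ((1 + e)^-1) Kchi Ke (inv1e e0); rewrite comb_id //.
    by move=> /(_ Ff0) [].
  exfalso; have [l3 [FNl3 [hl3 hv]]] := exitK (FK _ Ff0) ne.
  have F3 : ([set x | dotv l3 x = hN l3 + dotv l3 delta0] `&` K) f0.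
    by split; [rewrite /= -hl3 dotvBr subrK | exact: FK].
  have F3p i := (fall _ (faceK _ _ _) F3 i).1.
  have [a la] := par_pts rf lHnz (fun i => FL _ (pF i)) F3p.
  move: hv; rewrite la dotvZl dotvBr (FL _ Ff0) lHchi subrr mulr0.
  by rewrite ltxx.
move=> G fGG Gchi f Ff.
case: (pselect (exists e, 0 < e /\ K (chi + e *: (chi - f)))) => [[e [e0 Ke]]|ne].
  have [_ [_ gG]] := fGG.
  have := gG _ _ ((1 + e)^-1) (FK _ Ff) Ke (inv1e e0); rewrite comb_id //.
  by move=> /(_ Gchi) [].
exfalso; have [l4 [FNl4 [hl4 hv]]] := exitK Kchi ne.
have P4 : [set x | dotv l4 x = dotv l4 chi - hN l4] delta0.
  by rewrite /= -hl4 dotvBr; ring.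
have [PH _] := seg_hyp (hyp_of_FN s0 FNl4 lat) P4 hd0.
have [a la] := par_hyp lHnz (etrans PH He) d0H.
move: hv; rewrite la dotvZl dotvBr (FL _ Ff) lHchi subrr mulr0.
by rewrite ltxx.
Qed.

End Main.

End L8.
Import L8.

Theorem lemma4p13 (R : realType) (n d : nat) (beta : 'I_d -> 'rV[int]_n)
  (hqs : quasi_symmetric R beta)
  (hspan : spans (Sigma R beta))
  (hgen : generic_nonempty R beta)
  (delta delta' delta0 : 'rV[R]_n) (H F : set 'rV[R]_n)
  (hd : avoids_H R beta delta) (hd' : avoids_H R beta delta')
  (hH : hypH R beta H)
  (hHmeet : intersects (segment delta delta') H)
  (hHuniq : forall B, hypH R beta B -> intersects (segment delta delta') B -> B = H)
  (hd0 : segment delta delta' delta0) (hd0H : H delta0)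
  (hF : is_facet (translate delta0 (Nabla R beta)) F)
  (hFpar : parallel F H)
  (hFmeet : intersects F (translate delta (Nabla R beta))) :
  CFset R beta delta delta0 F = Cset R beta delta `\` Cset R beta delta' /\
  Cset R beta delta `\` CFset R beta delta delta0 F = Cset R beta delta `&` Cset R beta delta'.
Proof.
have [lH [cH [lHnz [He hor]]]] := orient hd hH.
have E : CFset R beta delta delta0 F = Cset R beta delta `\` Cset R beta delta'.
  apply/seteqP; split => chi.
    exact: (dir1 hqs hspan hd' hH hd0 hd0H hF hFpar hFmeet lHnz He hor).
  exact: (dir2 hqs hspan hd' hH hHuniq hd0 hd0H hF hFpar hFmeet lHnz He hor).
by split => //; rewrite E setDD.
Qed.
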